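(* Let $\mathcal{D}$ be a distribution on $\mathbb{R}^d\times\mathbb{R}$ such that, for $(\mathbf{x},y)\sim\mathcal{D}$, $\|\mathbf{x}\|_2\le1$ and $|y|\le B$ with probability $1$, and suppose the second moments $\mathbb{E}_{\mathcal{D}}[x_i^2]$, $i\in[d]$, are known. Let $\bar{\mathbf{w}}$ be the output of DDAERR on $m$ i.i.d. examples from $\mathcal{D}$ with budget $k$, run with $\eta=\Big(m\big(\tfrac1k\|\mathbb{E}_{\mathcal{D}}[\mathbf{x}^2]\|_{1/2}+1\big)\Big)^{-1/2}$. Then for every $\mathbf{w}^*\in\mathbb{R}^d$ with $\|\mathbf{w}^*\|_2\le B$, $$\mathbb{E}_{\mathcal{D},A}\big[L_{\mathcal{D}}(\bar{\mathbf{w}})\big]\le L_{\mathcal{D}}(\mathbf{w}^* )+\frac{4B^2}{\sqrt m}\sqrt{\frac1k\|\mathbb{E}_{\mathcal{D}}[\mathbf{x}^2]\|_{1/2}+1}.$$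
   Context: Loss $\ell(\mathbf{w};\mathbf{x},y)=\frac12(\langle\mathbf{w},\mathbf{x}\rangle-y)^2$; risk $L_{\mathcal{D}}(\mathbf{w})=\mathbb{E}_{(\mathbf{x},y)\sim\mathcal{D}}[\ell(\mathbf{w};\mathbf{x},y)]$. $\mathbb{E}_{\mathcal{D}}[\mathbf{x}^2]$ is the vector with entries $\mathbb{E}_{\mathcal{D}}[x_i^2]$; for a vector $\mathbf{a}$, $\|\mathbf{a}\|_{1/2}=\big(\sum_{i=1}^d\sqrt{|a_i|}\big)^2$. Algorithm GAERR (parameters $B,\eta>0$, probabilities $q_i$ with $\sum_iq_i=1$, integer budget $k>0$; input $(\mathbf{x}_t,y_t)$, $t=1,\dots,m$): initialize $\mathbf{w}_1\ne0$, $\|\mathbf{w}_1\|_2\le B$ arbitrarily. For each $t$: for $r=1,\dots,k$ draw $i_{t,r}$ with probability $q_{i_{t,r}}$ and set $\widetilde{\mathbf{x}}_{t,r}=\frac{1}{q_{i_{t,r}}}\mathbf{x}_t[i_{t,r}]\mathbf{e}_{i_{t,r}}$; $\widetilde{\mathbf{x}}_t=\frac1k\sum_r\widetilde{\mathbf{x}}_{t,r}$; draw $j_t$ with probability $p_j=w_{t,j}^2/\|\mathbf{w}_t\|_2^2$ and set $\widetilde\phi_t=\frac{w_{t,j_t}}{p_{j_t}}\mathbf{x}_t[j_t]-y_t$; $\widetilde{\mathbf{g}}_t=\widetilde\phi_t\widetilde{\mathbf{x}}_t$; $\mathbf{v}_t=\mathbf{w}_t-\eta\widetilde{\mathbf{g}}_t$;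 $\mathbf{w}_{t+1}=\mathbf{v}_t B/\max\{\|\mathbf{v}_t\|_2,B\}$. Output $\bar{\mathbf{w}}=\frac1m\sum_{t=1}^m\mathbf{w}_t$. DDAERR is GAERR with $q_i=\sqrt{\mathbb{E}_{\mathcal{D}}[x_i^2]}\big/\sum_{j=1}^d\sqrt{\mathbb{E}_{\mathcal{D}}[x_j^2]}$. $\mathbb{E}_{\mathcal{D},A}$ is expectation over the examples and the algorithm's randomness. *)

(* Defs.v *)
From HB Require Import structures.
From mathcomp Require Import all_boot all_order all_algebra.
From mathcomp Require Import all_classical all_reals all_analysis.
Set Implicit Arguments. Unset Strict Implicit. Unset Printing Implicit Defensive.
Import Order.TTheory GRing.Theory Num.Theory.
Local Open Scope ring_scope.

Section GAERR.
Variable R : realType.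
Variable d : nat.

Definition dotv (u v : 'rV[R]_d) : R := \sum_(i < d) u 0 i * v 0 i.
Definition norm2 (v : 'rV[R]_d) : R := Num.sqrt (dotv v v).

Definition half_norm (a : 'I_d -> R) : R := (\sum_(i < d) Num.sqrt `|a i|) ^+ 2.

Definition sqloss (w x : 'rV[R]_d) (y : R) : R := 2^-1 * (dotv w x - y) ^+ 2.

Variables (dT : measure_display) (T : measurableType dT).
Variable P : probability T R.          (* the distribution D, via (X,Y) *)
Variable X : T -> 'rV[R]_d.
Variable Y : T -> R.

Definition risk (w : 'rV[R]_d) : \bar R := (\int[P]_t (sqloss w (X t) (Y t))%:E)%E.

Definition second_moment (i : 'I_d) : R := fine (\int[P]_t ((X t 0 i) ^+ 2)%:E)%E.

Variables (B eta : R) (q : 'I_d -> R) (k : nat).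

Definition xtilde (s : {ffun 'I_k -> 'I_d}) (x : 'rV[R]_d) : 'rV[R]_d :=
  k%:R^-1 *: \sum_(r < k) ((q (s r))^-1 * x 0 (s r)) *: (delta_mx 0 (s r) : 'rV[R]_d).

Definition sweight (s : {ffun 'I_k -> 'I_d}) : R := \prod_(r < k) q (s r).

Definition pj (w : 'rV[R]_d) (j : 'I_d) : R := w 0 j ^+ 2 / norm2 w ^+ 2.

(* expectation over j_t of F(phi~_t); convention when w_t = 0: phi~_t = -y *)
Definition avg_phi (w x : 'rV[R]_d) (y : R) (F : R -> \bar R) : \bar R :=
  if w == 0 then F (- y)
  else (\sum_(j < d) (pj w j)%:E * F (w 0 j / pj w j * x 0 j - y)%R)%E.

Definition update (w : 'rV[R]_d) (phi : R) (xt : 'rV[R]_d) : 'rV[R]_d :=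
  let v := w - eta *: (phi *: xt) in (B / Num.max (norm2 v) B) *: v.

Definition avg_iter (ws : seq 'rV[R]_d) : 'rV[R]_d :=
  (size ws)%:R^-1 *: \sum_(w <- ws) w.

(* expectation, over n further fresh examples and the algorithm's randomness,
   of f applied to the full history of iterates, starting from history ws *)
Fixpoint run_exp (f : seq 'rV[R]_d -> \bar R) (n : nat) (ws : seq 'rV[R]_d)
  : \bar R :=
  match n with
  | 0 => f ws
  | n'.+1 =>
    let w := last 0 ws in
    (\int[P]_t (\sum_(s : {ffun 'I_k -> 'I_d})
        (sweight s)%:E *
        avg_phi w (X t) (Y t)
          (fun phi => run_exp f n' (rcons ws (update w phi (xtilde s (X t)))))))%E
  end.

Definition expected_output_risk (m : nat) (w1 : 'rV[R]_d) : \bar R :=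
  run_exp (fun ws => risk (avg_iter ws)) m.-1 [:: w1].

End GAERR.

Definition ddaerr_q (R : realType) (d : nat) (mom : 'I_d -> R) (i : 'I_d) : R :=
  Num.sqrt (mom i) / \sum_(j < d) Num.sqrt (mom j).

(* Main.v *)
Require Import Defs.
From HB Require Import structures.
From mathcomp Require Import all_boot all_order all_algebra.
From mathcomp Require Import all_classical all_reals all_analysis.
From mathcomp Require Import measurable_realfun.
From mathcomp Require Import ring lra.
Set Implicit Arguments. Unset Strict Implicit. Unset Printing Implicit Defensive.
Import Order.TTheory GRing.Theory Num.Theory.
Local Open Scope ring_scope.

Section Vec.
Variable R : realType.
Variable d : nat.
Implicit Types u v w : 'rV[R]_d.

Lemma dotvC u v : dotv u v = dotv v u.
Proof. by apply: eq_bigr => i _; rewrite mulrC. Qed.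

Lemma dotvDl u v w : dotv (u + v) w = dotv u w + dotv v w.
Proof. by rewrite /dotv -big_split; apply: eq_bigr => i _; rewrite !mxE mulrDl. Qed.

Lemma dotvBl u v w : dotv (u - v) w = dotv u w - dotv v w.
Proof. by rewrite /dotv -sumrB; apply: eq_bigr => i _; rewrite !mxE mulrBl. Qed.

Lemma dotvZl (c : R) u w : dotv (c *: u) w = c * dotv u w.
Proof. by rewrite /dotv mulr_sumr; apply: eq_bigr => i _; rewrite !mxE mulrA. Qed.

Lemma dotvNl u w : dotv (- u) w = - dotv u w.
Proof. by rewrite -scaleN1r dotvZl mulN1r. Qed.
Lemma dotvNr u w : dotv w (- u) = - dotv w u.
Proof. by rewrite dotvC dotvNl dotvC. Qed.

Lemma dotvDr u v w : dotv w (u + v) = dotv w u + dotv w v.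
Proof. by rewrite dotvC dotvDl !(dotvC w). Qed.
Lemma dotvBr u v w : dotv w (u - v) = dotv w u - dotv w v.
Proof. by rewrite dotvC dotvBl !(dotvC w). Qed.
Lemma dotvZr (c : R) u w : dotv w (c *: u) = c * dotv w u.
Proof. by rewrite dotvC dotvZl dotvC. Qed.

Lemma dotv_ge0 u : 0 <= dotv u u.
Proof. by apply: sumr_ge0 => i _; rewrite -expr2 sqr_ge0. Qed.

Lemma norm2_sq u : norm2 u ^+ 2 = dotv u u.
Proof. by rewrite /norm2 sqr_sqrtr // dotv_ge0. Qed.

Lemma norm2_ge0 u : 0 <= norm2 u.
Proof. exact: sqrtr_ge0. Qed.

Lemma dotv_expand u v (c : R) :
  dotv (u - c *: v) (u - c *: v) = dotv u u - 2 * c * dotv u v + c ^+ 2 * dotv v v.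
Proof.
rewrite !dotvBl !dotvBr !dotvZl !dotvZr (dotvC v u); ring.
Qed.

Lemma dotv_eq0 u : dotv u u = 0 -> forall i, u 0 i = 0.
Proof.
move=> h i; have /psumr_eq0P H : \sum_(i < d) u 0 i * u 0 i = 0 by [].
have := H (fun j _ => ltac:(by rewrite -expr2 sqr_ge0)) i isT.
by rewrite -expr2 => /eqP; rewrite sqrf_eq0 => /eqP.
Qed.

Lemma cauchy_schwarz_sq u v : dotv u v ^+ 2 <= dotv u u * dotv v v.
Proof.
have [v0|vn0] := eqVneq (dotv v v) 0.
  have -> : dotv u v = 0.
    by apply: big1 => i _; rewrite (dotv_eq0 v0) mulr0.
  by rewrite v0 expr0n /= mulr0.
have vp : 0 < dotv v v by rewrite lt_neqAle eq_sym vn0 dotv_ge0.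
have := dotv_ge0 (u - (dotv u v / dotv v v) *: v).
rewrite dotv_expand => h.
have : 0 <= dotv v v * (dotv u u - 2 * (dotv u v / dotv v v) * dotv u v +
    (dotv u v / dotv v v) ^+ 2 * dotv v v) by rewrite mulr_ge0 // ltW.
have -> : dotv v v * (dotv u u - 2 * (dotv u v / dotv v v) * dotv u v +
    (dotv u v / dotv v v) ^+ 2 * dotv v v) = dotv u u * dotv v v - dotv u v ^+ 2.
  by field; rewrite vn0.
by rewrite subr_ge0.
Qed.

Lemma cauchy_schwarz u v : dotv u v <= norm2 u * norm2 v.
Proof.
have h := cauchy_schwarz_sq u v.
have : `|dotv u v| <= norm2 u * norm2 v.
  rewrite -[leRHS]ger0_norm ?mulr_ge0 ?norm2_ge0 //.
  by rewrite -ler_sqr ?normr_ge0 // !real_normK ?num_real // exprMn !norm2_sq.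
by apply: le_trans; rewrite ler_norm.
Qed.

Lemma norm2Z (c : R) u : norm2 (c *: u) = `|c| * norm2 u.
Proof.
by rewrite /norm2 dotvZl dotvZr mulrA -expr2 sqrtrM ?sqr_ge0 // sqrtr_sqr.
Qed.

Lemma dotv_le1 (B : R) u : norm2 u <= B -> dotv u u <= B ^+ 2.
Proof.
move=> h; rewrite -norm2_sq; rewrite ler_sqr ?nnegrE ?norm2_ge0 //.
exact: le_trans (norm2_ge0 u) h.
Qed.

(* projection onto the ball is nonexpansive towards points of the ball *)
Lemma proj_contract (B : R) (v z : 'rV[R]_d) : 0 < B -> norm2 z <= B ->
  dotv ((B / Num.max (norm2 v) B) *: v - z) ((B / Num.max (norm2 v) B) *: v - z)
    <= dotv (v - z) (v - z).
Proof.
move=> B0 zB; set pv := (B / Num.max (norm2 v) B) *: v.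
have [vB|vB] := leP (norm2 v) B.
  by rewrite /pv (max_r vB) divff ?gt_eqF // scale1r.
rewrite /pv (max_l (ltW vB)).
set c := B / norm2 v.
have nv0 : 0 < norm2 v by apply: lt_trans vB.
have c1 : c <= 1 by rewrite /c ler_pdivrMr // mul1r ltW.
have cB : c * norm2 v = B by rewrite /c divfK // gt_eqF.
have cs := cauchy_schwarz v z.
have -> : v - z = (c *: v - z) + (1 - c) *: v.
  by rewrite scalerBl scale1r [RHS]addrC addrA subrK.
rewrite !(dotvDl,dotvDr,dotvBl,dotvBr,dotvZl,dotvZr,dotvNl,dotvNr).
have vv : dotv v v = norm2 v ^+ 2 by rewrite norm2_sq.
rewrite (dotvC z v).
have key : 0 <= (1 - c) * (c * dotv v v - dotv v z).
  apply: mulr_ge0; first by rewrite subr_ge0.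
  rewrite subr_ge0 vv; apply: (le_trans cs).
  by rewrite expr2 mulrA cB [leLHS]mulrC ler_wpM2r ?norm2_ge0.
have : 0 <= (1 - c) ^+ 2 * dotv v v by rewrite mulr_ge0 ?sqr_ge0 ?dotv_ge0.
lra.
Qed.

End Vec.

Section Samp.
Variable R : realType.
Variables (d k : nat) (q : 'I_d -> R).
Hypothesis q1 : \sum_(j < d) q j = 1.

Lemma sum_prod (F : 'I_k -> 'I_d -> R) :
  \sum_(s : {ffun 'I_k -> 'I_d}) \prod_(r < k) F r (s r) = \prod_(r < k) \sum_(j < d) F r j.
Proof. by rewrite bigA_distr_bigA. Qed.

Lemma sweight_sum : \sum_(s : {ffun 'I_k -> 'I_d}) sweight q s = 1.
Proof. by rewrite /sweight (sum_prod (fun _ j => q j)); apply: big1 => r _. Qed.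

Lemma prod_if1 (r : 'I_k) (a : 'I_k -> R) :
  \prod_(l < k) (if l == r then a l else 1) = a r.
Proof.
rewrite (bigD1 r) //= eqxx big1 ?mulr1 // => l /negbTE ->; done.
Qed.

Lemma prod_if2 (r r' : 'I_k) (a b : 'I_k -> R) : r != r' ->
  \prod_(l < k) (if l == r then a l else if l == r' then b l else 1) = a r * b r'.
Proof.
move=> rr; rewrite (bigD1 r) //= eqxx (bigD1 r') /=; last by rewrite eq_sym.
rewrite eq_sym (negbTE rr) eqxx big1 ?mulr1 // => l /andP[/negbTE -> /negbTE ->].
done.
Qed.

Lemma sweight_exp1 (r : 'I_k) (g : 'I_d -> R) :
  \sum_(s : {ffun 'I_k -> 'I_d}) sweight q s * g (s r) = \sum_(j < d) q j * g j.
Proof.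
transitivity (\sum_(s : {ffun 'I_k -> 'I_d})
   \prod_(l < k) (q (s l) * (if l == r then g (s l) else 1))).
  apply: eq_bigr => s _; rewrite big_split /= prod_if1 //.
rewrite (sum_prod (fun l j => q j * (if l == r then g j else 1))) (bigD1 r) //= [X in _ * X]big1 ?mulr1.
  by apply: eq_bigr => j _; rewrite eqxx.
move=> l /negbTE lr; rewrite -[RHS]q1; apply: eq_bigr => j _; by rewrite lr mulr1.
Qed.

Lemma sweight_exp2 (r r' : 'I_k) (g1 g2 : 'I_d -> R) : r != r' ->
  \sum_(s : {ffun 'I_k -> 'I_d}) sweight q s * (g1 (s r) * g2 (s r')) =
  (\sum_(j < d) q j * g1 j) * (\sum_(j < d) q j * g2 j).
Proof.
move=> rr.
transitivity (\sum_(s : {ffun 'I_k -> 'I_d})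
   \prod_(l < k) (q (s l) * (if l == r then g1 (s l) else
                              if l == r' then g2 (s l) else 1))).
  apply: eq_bigr => s _; rewrite big_split /= prod_if2 //.
rewrite (sum_prod (fun l j => q j * (if l == r then g1 j else if l == r' then g2 j else 1))).
rewrite (bigD1 r) //= (bigD1 r') /=; last by rewrite eq_sym.
rewrite [X in _ * (_ * X)]big1 ?mulr1.
  congr (_ * _); apply: eq_bigr => j _.
    by rewrite eqxx.
  by rewrite eq_sym (negbTE rr) eqxx.
move=> l /andP[/negbTE lr /negbTE lr']; rewrite -[RHS]q1; apply: eq_bigr => j _.
by rewrite lr lr' mulr1.
Qed.

Definition cc (x : 'rV[R]_d) (j : 'I_d) := (q j)^-1 * x 0 j.

Lemma xtildeE (s : {ffun 'I_k -> 'I_d}) x i :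
  xtilde q s x 0 i = k%:R^-1 * \sum_(r < k) cc x (s r) * (s r == i)%:R.
Proof.
rewrite /xtilde mxE summxE; congr (_ * _); apply: eq_bigr => r _.
by rewrite !mxE eqxx /= eq_sym.
Qed.

Lemma sum_delta (j : 'I_d) (u : 'I_d -> R) :
  \sum_(i < d) (j == i)%:R * u i = u j.
Proof.
rewrite (bigD1 j) //= eqxx mul1r big1 ?addr0 // => i /negbTE.
by rewrite eq_sym => ->; rewrite mul0r.
Qed.

Lemma dotv_xtilde s x u :
  dotv (xtilde q s x) u = k%:R^-1 * \sum_(r < k) cc x (s r) * u 0 (s r).
Proof.
rewrite /dotv; under eq_bigr do rewrite xtildeE -mulrA mulr_suml.
rewrite -mulr_sumr; congr (_ * _); rewrite exchange_big /=.
apply: eq_bigr => r _.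
under eq_bigr do rewrite -mulrA.
by rewrite -mulr_sumr sum_delta.
Qed.

Hypothesis k0 : (0 < k)%N.

Lemma exp_dotv_xtilde x u :
  \sum_(s : {ffun 'I_k -> 'I_d}) sweight q s * dotv (xtilde q s x) u =
  \sum_(j < d) q j * cc x j * u 0 j.
Proof.
under eq_bigr do rewrite dotv_xtilde mulrCA mulr_sumr.
rewrite -mulr_sumr exchange_big /=.
under eq_bigr do rewrite (sweight_exp1 _ (fun j => cc x j * u 0 j)).
rewrite sumr_const card_ord; set S := \sum_(j < d) _.
rewrite -(mulr_natl S k) mulrA mulVf ?mul1r ?pnatr_eq0 -?lt0n // {}/S.
by apply: eq_bigr => j _; rewrite mulrA.
Qed.

Lemma exp_norm_xtilde x :
  \sum_(s : {ffun 'I_k -> 'I_d}) sweight q s * dotv (xtilde q s x) (xtilde q s x) =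
  k%:R^-1 * \sum_(j < d) q j * cc x j ^+ 2 +
  (1 - k%:R^-1) * \sum_(j < d) (q j * cc x j) ^+ 2.
Proof.
pose g (i j : 'I_d) := cc x j * (j == i)%:R.
have E s : dotv (xtilde q s x) (xtilde q s x) =
   \sum_(i < d) k%:R^-1 ^+ 2 * \sum_(r < k) \sum_(r' < k) g i (s r) * g i (s r').
  apply: eq_bigr => i _; rewrite xtildeE -expr2 exprMn; congr (_ * _).
  by rewrite expr2 mulr_suml; apply: eq_bigr => r _; rewrite mulr_sumr.
under eq_bigr do rewrite E mulr_sumr.
rewrite exchange_big /=.
have Ei i : \sum_(s : {ffun 'I_k -> 'I_d}) sweight q s *
    (k%:R^-1 ^+ 2 * \sum_(r < k) \sum_(r' < k) g i (s r) * g i (s r')) =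
    k%:R^-1 * (q i * cc x i ^+ 2) + (1 - k%:R^-1) * (q i * cc x i) ^+ 2.
  under eq_bigr do rewrite mulrCA mulr_sumr.
  rewrite -mulr_sumr exchange_big /=.
  have Er r : \sum_(s : {ffun 'I_k -> 'I_d}) sweight q s *
      \sum_(r' < k) g i (s r) * g i (s r') =
      q i * cc x i ^+ 2 + (k.-1)%:R * (q i * cc x i) ^+ 2.
    under eq_bigr do rewrite mulr_sumr.
    rewrite exchange_big /= (bigD1 r) //=.
    have -> : \sum_(s : {ffun 'I_k -> 'I_d}) sweight q s * (g i (s r) * g i (s r)) =
       q i * cc x i ^+ 2.
      rewrite (sweight_exp1 r (fun j => g i j * g i j)).
      rewrite (bigD1 i) //= big1 ?addr0 /g ?eqxx ?mulr1 ?expr2 //.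
      by move=> j /negbTE ->; rewrite !mulr0.
    congr (_ + _).
    under eq_bigr => r' rr' do rewrite (sweight_exp2 (g i) (g i)) 1?eq_sym //.
    have -> : \sum_(j < d) q j * g i j = q i * cc x i.
      rewrite (bigD1 i) //= big1 ?addr0 /g ?eqxx ?mulr1 //.
      by move=> j /negbTE ->; rewrite !mulr0.
    by rewrite sumr_const cardC1 card_ord mulr_natl expr2.
  under eq_bigr do rewrite Er.
  rewrite sumr_const card_ord; set S := (_ + _).
  rewrite -(mulr_natl S k) {}/S.
  have kn : (k%:R : R) != 0 by rewrite pnatr_eq0 -lt0n.
  have -> : (k.-1)%:R = k%:R - 1 :> R.
    by rewrite -[in RHS](prednK k0) -natr1 addrK.
  by field.
under eq_bigr do rewrite Ei.
by rewrite big_split /= -!mulr_sumr.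
Qed.

End Samp.

Section Phi.
Variable R : realType.
Variable d : nat.
Implicit Types (w x : 'rV[R]_d) (y : R).

Definition Ej w x y (F : R -> R) : R :=
  if w == 0 then F (- y)
  else \sum_(j < d) pj w j * F (w 0 j / pj w j * x 0 j - y).

Lemma pj_ge0 w j : 0 <= pj w j.
Proof. by rewrite /pj divr_ge0 ?sqr_ge0. Qed.

Lemma dotv_neq0 w : w != 0 -> 0 < dotv w w.
Proof.
move=> wn; rewrite lt_neqAle dotv_ge0 andbT eq_sym; apply/eqP => h.
move/eqP: wn; apply; apply/matrixP => i j; rewrite mxE.
by rewrite (ord1 i) (dotv_eq0 h).
Qed.

Lemma pj_sum w : w != 0 -> \sum_(j < d) pj w j = 1.
Proof.
move=> wn; rewrite /pj -mulr_suml norm2_sq.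
under eq_bigr do rewrite expr2.
by rewrite divff // gt_eqF // dotv_neq0.
Qed.

Lemma pj_w w j : w != 0 -> pj w j * (w 0 j / pj w j) = w 0 j.
Proof.
move=> wn; have [->|wj] := eqVneq (w 0 j) 0; first by rewrite mul0r mulr0.
have Np : 0 < norm2 w ^+ 2 by rewrite norm2_sq dotv_neq0.
have pn : pj w j != 0.
  by rewrite /pj mulf_neq0 // ?sqrf_eq0 // invr_eq0 gt_eqF.
by rewrite mulrCA divff // mulr1.
Qed.

Lemma pj_sq w j : w != 0 -> pj w j * (w 0 j / pj w j) ^+ 2 <= norm2 w ^+ 2.
Proof.
move=> wn; have [->|wj] := eqVneq (w 0 j) 0.
  by rewrite mul0r expr0n /= mulr0 sqr_ge0.
have Np : 0 < norm2 w ^+ 2 by rewrite norm2_sq dotv_neq0.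
have pn : pj w j != 0.
  by rewrite /pj mulf_neq0 // ?sqrf_eq0 // invr_eq0 gt_eqF.
have -> : pj w j * (w 0 j / pj w j) ^+ 2 = norm2 w ^+ 2.
  rewrite /pj; field.
  have Nn : norm2 w != 0 by move: Np; apply: contraTneq => ->; rewrite expr0n /= ltxx.
  by rewrite Nn wj.
done.
Qed.

Lemma avg_phiE w x y (F : R -> R) :
  avg_phi w x y (fun p => (F p)%:E) = (Ej w x y F)%:E.
Proof.
rewrite /avg_phi /Ej; case: ifP => // _.
by rewrite -sumEFin; apply: eq_bigr => j _.
Qed.

Lemma avg_phi_le w x y (F G : R -> \bar R) :
  (forall p, (F p <= G p)%E) -> (avg_phi w x y F <= avg_phi w x y G)%E.
Proof.
move=> FG; rewrite /avg_phi; case: ifP => // _.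
apply: lee_sum => j _; apply: lee_wpmul2l => //; rewrite lee_fin pj_ge0 //.
Qed.

Lemma avg_phi_ge0 w x y (F : R -> \bar R) :
  (forall p, (0 <= F p)%E) -> (0 <= avg_phi w x y F)%E.
Proof.
move=> F0; rewrite /avg_phi; case: ifP => // _.
apply: sume_ge0 => j _; apply: mule_ge0 => //; rewrite lee_fin pj_ge0 //.
Qed.

Lemma Ej_le w x y (F G : R -> R) : (forall p, F p <= G p) -> Ej w x y F <= Ej w x y G.
Proof.
move=> FG; rewrite /Ej; case: ifP => // _.
by apply: ler_sum => j _; apply: ler_wpM2l; rewrite ?pj_ge0.
Qed.

Lemma Ej_quad w x y (a b c : R) :
  Ej w x y (fun p => a + b * p + c * p ^+ 2) =
  a + b * Ej w x y id + c * Ej w x y (fun p => p ^+ 2).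
Proof.
rewrite /Ej; case: ifP => // /negbT wn.
transitivity (\sum_(j < d) (a * pj w j + b * (pj w j * (w 0 j / pj w j * x 0 j - y))
   + c * (pj w j * (w 0 j / pj w j * x 0 j - y) ^+ 2))).
  by apply: eq_bigr => j _; ring.
by rewrite !big_split /= -!mulr_sumr pj_sum // mulr1.
Qed.

Lemma Ej_id w x y : Ej w x y id = dotv w x - y.
Proof.
rewrite /Ej; case: ifPn => [/eqP ->|wn].
  by rewrite /dotv big1 ?add0r // => i _; rewrite mxE mul0r.
transitivity (\sum_(j < d) (pj w j * (w 0 j / pj w j) * x 0 j - y * pj w j)).
  by apply: eq_bigr => j _ /=; ring.
rewrite sumrB -mulr_sumr pj_sum // mulr1; congr (_ - _).
by apply: eq_bigr => j _; rewrite pj_w.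
Qed.

Lemma Ej_sq w x y (B : R) : norm2 w <= B -> norm2 x <= 1 -> `|y| <= B ->
  Ej w x y (fun p => p ^+ 2) <= 4 * B ^+ 2.
Proof.
move=> wB x1 yB.
have B0 : 0 <= B by apply: le_trans yB.
have y2 : y ^+ 2 <= B ^+ 2 by rewrite -real_normK ?num_real // ler_sqr ?nnegrE.
rewrite /Ej; case: ifPn => [_|wn]; first by rewrite sqrrN; nra.
have xx : dotv x x <= 1 by have := dotv_le1 x1; rewrite expr1n.
have ww : dotv w w <= B ^+ 2 by apply: dotv_le1.
have cs := cauchy_schwarz_sq w x.
have h1 : \sum_(j < d) pj w j * (w 0 j / pj w j * x 0 j - y) ^+ 2 =
   \sum_(j < d) pj w j * (w 0 j / pj w j) ^+ 2 * x 0 j ^+ 2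
   - 2 * y * \sum_(j < d) pj w j * (w 0 j / pj w j) * x 0 j
   + y ^+ 2 * \sum_(j < d) pj w j.
  rewrite !mulr_sumr -sumrB -big_split /=; apply: eq_bigr => j _; ring.
rewrite h1 pj_sum // mulr1.
have -> : \sum_(j < d) pj w j * (w 0 j / pj w j) * x 0 j = dotv w x.
  by apply: eq_bigr => j _; rewrite pj_w.
have h2 : \sum_(j < d) pj w j * (w 0 j / pj w j) ^+ 2 * x 0 j ^+ 2 <= B ^+ 2.
  apply: (@le_trans _ _ (norm2 w ^+ 2 * dotv x x)).
    rewrite mulr_sumr; apply: ler_sum => j _; rewrite -expr2.
    by apply: ler_wpM2r; rewrite ?sqr_ge0 ?pj_sq.
  rewrite norm2_sq; have := dotv_ge0 w; have := dotv_ge0 x; nra.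
have h3 : dotv w x ^+ 2 <= B ^+ 2.
  apply: (le_trans cs); have := dotv_ge0 w; have := dotv_ge0 x; nra.
nra.
Qed.

End Phi.

Section Step.
Variable R : realType.
Variables (d k : nat) (q : 'I_d -> R) (B eta : R).
Hypothesis q1 : \sum_(j < d) q j = 1.
Hypothesis q0 : forall j, 0 <= q j.
Hypothesis k0 : (0 < k)%N.
Hypothesis B0 : 0 < B.
Hypothesis eta0 : 0 < eta.

Lemma eqle (x y : R) : x = y -> x <= y. Proof. by move=> ->. Qed.

Definition Dn (u : 'rV[R]_d) := dotv u u.

Definition Qv (w wstar x : 'rV[R]_d) (y : R) : R :=
  \sum_(s : {ffun 'I_k -> 'I_d}) sweight q s *
    Ej w x y (fun p => Dn (update B eta w p (xtilde q s x) - wstar)).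

Definition Mv (x : 'rV[R]_d) : R :=
  4 * B ^+ 2 * (k%:R^-1 * \sum_(j < d) q j * cc q x j ^+ 2 + 1).

Lemma sweight_ge0 (s : {ffun 'I_k -> 'I_d}) : 0 <= sweight q s.
Proof. by apply: prodr_ge0 => r _. Qed.

Lemma Qv_ge0 w wstar x y : 0 <= Qv w wstar x y.
Proof.
apply: sumr_ge0 => s _; apply: mulr_ge0; first exact: sweight_ge0.
have -> : 0 = Ej w x y (fun p => 0 + 0 * p + 0 * p ^+ 2).
  by rewrite Ej_quad !mul0r !addr0.
by apply: Ej_le => p; rewrite !mul0r !addr0 dotv_ge0.
Qed.

Lemma step_pt w wstar x y :
  norm2 w <= B -> norm2 wstar <= B -> norm2 x <= 1 -> `|y| <= B ->
  (forall j, q j = 0 -> x 0 j = 0) ->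
  Qv w wstar x y / (2 * eta) + sqloss w x y <=
  Dn (w - wstar) / (2 * eta) + eta / 2 * Mv x + sqloss wstar x y.
Proof.
move=> wB wsB x1 yB qx.
set a := w - wstar.
set E1 := dotv w x - y.
set E2 := Ej w x y (fun p => p ^+ 2).
pose S2 := \sum_(s : {ffun 'I_k -> 'I_d}) sweight q s * Dn (xtilde q s x).
pose A := \sum_(j < d) q j * cc q x j ^+ 2.
have Hpt s p : Dn (update B eta w p (xtilde q s x) - wstar) <=
   Dn a + (- 2 * eta * dotv a (xtilde q s x)) * p
   + (eta ^+ 2 * Dn (xtilde q s x)) * p ^+ 2.
  rewrite /update /Dn /=.
  apply: le_trans (proj_contract (w - eta *: (p *: xtilde q s x)) B0 wsB) _.
  have -> : w - eta *: (p *: xtilde q s x) - wstar = a - (eta * p) *: xtilde q s x.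
    by rewrite scalerA /a addrAC.
  rewrite dotv_expand; apply: eqle; ring.
have HQ : Qv w wstar x y <= Dn a + (- 2 * eta * E1) * dotv x a + eta ^+ 2 * E2 * S2.
  apply: (@le_trans _ _ (\sum_(s : {ffun 'I_k -> 'I_d}) sweight q s *
      (Dn a + (- 2 * eta * dotv a (xtilde q s x)) * E1
       + (eta ^+ 2 * Dn (xtilde q s x)) * E2))).
    apply: ler_sum => s _; apply: ler_wpM2l; first exact: sweight_ge0.
    by rewrite /E1 /E2 -Ej_id -Ej_quad; apply: Ej_le => p; exact: Hpt.
  have -> : \sum_(s : {ffun 'I_k -> 'I_d}) sweight q s *
      (Dn a + (- 2 * eta * dotv a (xtilde q s x)) * E1
       + (eta ^+ 2 * Dn (xtilde q s x)) * E2) =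
     Dn a * (\sum_(s : {ffun 'I_k -> 'I_d}) sweight q s)
     + (- 2 * eta * E1) * (\sum_(s : {ffun 'I_k -> 'I_d}) sweight q s * dotv (xtilde q s x) a)
     + eta ^+ 2 * E2 * S2.
    rewrite !mulr_sumr -!big_split /=; apply: eq_bigr => s _.
    rewrite (dotvC a); ring.
  rewrite sweight_sum // mulr1 exp_dotv_xtilde //.
  apply: eqle; congr (_ + _ * _ + _); apply: eq_bigr => j _.
  rewrite /cc mulrA; have [qj|qj] := eqVneq (q j) 0.
    by rewrite qx // qj !mul0r.
  by rewrite divff // mul1r.
have S2ge0 : 0 <= S2.
  by apply: sumr_ge0 => s _; rewrite mulr_ge0 ?sweight_ge0 ?dotv_ge0.
have S2le : S2 <= k%:R^-1 * A + 1.
  rewrite /S2 /Dn exp_norm_xtilde //.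
  apply: lerD => //.
  have h1 : \sum_(j < d) (q j * cc q x j) ^+ 2 <= 1.
    apply: (@le_trans _ _ (dotv x x)); last by have := dotv_le1 x1; rewrite expr1n.
    apply: ler_sum => j _; rewrite /cc mulrA.
    have [qj|qj] := eqVneq (q j) 0; first by rewrite qj !mul0r expr0n /= -expr2 sqr_ge0.
    by rewrite divff // mul1r expr2.
  have kk1 : 0 <= (k%:R^-1 : R) by rewrite invr_ge0 ler0n.
  have kk2 : (k%:R^-1 : R) <= 1 by rewrite invf_le1 ?ltr0n // ler1n.
  have h0 : 0 <= \sum_(j < d) (q j * cc q x j) ^+ 2 by apply: sumr_ge0 => j _; exact: sqr_ge0.
  nra.
have E2le : E2 <= 4 * B ^+ 2 by apply: Ej_sq.
have HQ2 : Qv w wstar x y <= Dn a - 2 * eta * (E1 * dotv x a) + eta ^+ 2 * Mv x.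
  apply: (le_trans HQ); rewrite /Mv -/A.
  have : E2 * S2 <= 4 * B ^+ 2 * (k%:R^-1 * A + 1).
    apply: (@le_trans _ _ (4 * B ^+ 2 * S2)); first by rewrite ler_wpM2r.
    by rewrite ler_wpM2l // mulr_ge0 // sqr_ge0.
  have := sqr_ge0 eta; nra.
have conv : sqloss w x y - sqloss wstar x y <= E1 * dotv x a.
  rewrite /sqloss /E1 /a dotvBr (dotvC x w) (dotvC x wstar).
  have := sqr_ge0 (dotv w x - dotv wstar x); nra.
have e2 : 0 < 2 * eta by rewrite mulr_gt0.
have : Qv w wstar x y / (2 * eta) <=
    (Dn a - 2 * eta * (E1 * dotv x a) + eta ^+ 2 * Mv x) / (2 * eta).
  by rewrite ler_wpM2r // invr_ge0 ltW.
have -> : (Dn a - 2 * eta * (E1 * dotv x a) + eta ^+ 2 * Mv x) / (2 * eta) =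
   Dn a / (2 * eta) - E1 * dotv x a + eta / 2 * Mv x.
  by field; rewrite gt_eqF.
lra.
Qed.

End Step.

Section Meas.
Local Open Scope classical_set_scope.
Variable R : realType.
Variables (dT : measure_display) (T : measurableType dT) (P : probability T R).
Import HBNNSimple.

Lemma int_le_ae (f : T -> \bar R) (g : T -> R) :
  (forall t, (0 <= f t)%E) -> measurable_fun setT g ->
  {ae P, forall t, (f t <= (g t)%:E)%E} ->
  (\int[P]_t f t <= \int[P]_t (g t)%:E)%E.
Proof.
move=> f0 mg fg.
have mG : measurable_fun setT (EFin \o g) by exact: measurableT_comp.
have gpos : {ae P, forall t, (0 <= (g t)%:E)%E}.
  by apply: filterS fg => t ft; exact: le_trans (f0 t) ft.
have neg0 : (\int[P]_t (funeneg (EFin \o g) t) = 0)%E.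
  have : (\int[P]_t funeneg (EFin \o g) t <= \int[P]_t (cst 0 t))%E.
    apply: ae_ge0_le_integral => //.
    all: try (by move=> t _; exact: funeneg_ge0).
    all: try exact: measurable_funeneg.
    all: try exact: measurable_cst.
    - apply: filterS gpos => t gt _; rewrite funenegE /=.
      by rewrite ge_max lexx andbT lee_fin oppr_le0 -lee_fin.
  rewrite integral0 => h; apply/eqP; rewrite eq_le h /=.
  by apply: integral_ge0 => t _; exact: funeneg_ge0.
rewrite ge0_integralTE //; apply: ge_ereal_sup => _ [h hf <-].
have := integral_nnsfun P measurableT h; rewrite patch_setT => <-.
rewrite [leRHS]integralE neg0 sube0.
apply: ae_ge0_le_integral => //.
all: try (by move=> t _; exact: funepos_ge0).
all: try exact: measurable_funepos.
all: try (by move=> t _; rewrite lee_fin).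
all: try (by apply: measurableT_comp).
all: try exact/measurable_EFinP.
- apply: filterS fg => t ft _; rewrite funeposE /=.
  by rewrite le_max (le_trans (hf t) ft).
Qed.

Lemma int_bnd (f : T -> R) (c : R) : 0 <= c -> measurable_fun setT f ->
  {ae P, forall t, `|f t| <= c} -> P.-integrable setT (EFin \o f).
Proof.
move=> c0 mf fc; apply/integrableP; split; first exact: measurableT_comp.
have : (\int[P]_t `|(EFin \o f) t| <= \int[P]_t (cst c%:E t))%E.
  apply: ae_ge0_le_integral => //.
  all: try (by move=> t _; exact: abse_ge0).
  all: try (by move=> t _; rewrite lee_fin).
  all: try (by apply: measurableT_comp => //; exact: measurableT_comp).
  by apply: filterS fc => t ft _ /=; rewrite lee_fin.
rewrite integral_cst // => h; apply: le_lt_trans h _.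
apply: (@le_lt_trans _ _ (c%:E * 1)%E); last by rewrite mule1 ltry.
by apply: lee_wpmul2l; [rewrite lee_fin|exact: probability_le1].
Qed.

Lemma intcst (c : R) : (\int[P]_t (c%:E))%E = c%:E.
Proof.
rewrite integral_cst //.
apply: (@eq_trans _ _ (c%:E * 1)%E); last by rewrite mule1.
congr (_ * _)%E; exact: probability_setT.
Qed.

End Meas.

Section Gen.
Local Open Scope classical_set_scope.
Variable R : realType.
Variables (d : nat) (dT : measure_display) (T : measurableType dT) (P : probability T R).
Variables (X : T -> 'rV[R]_d) (Y : T -> R) (B : R).
Hypothesis mX : forall i : 'I_d, measurable_fun setT (fun t => X t 0 i).
Hypothesis mY : measurable_fun setT Y.
Hypothesis aeX : {ae P, forall t, norm2 (X t) <= 1}.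
Hypothesis aeY : {ae P, forall t, `|Y t| <= B}.

Definition HasInt (g : T -> R) (I : R) :=
  P.-integrable setT (EFin \o g) /\ (\int[P]_t (g t)%:E = I%:E)%E.

Lemma HasInt_ext g1 g2 I : (forall t, g1 t = g2 t) -> HasInt g1 I -> HasInt g2 I.
Proof. by move=> e; have -> : g1 = g2 by apply/funext. Qed.

Lemma HasInt_cst c : HasInt (fun _ => c) c.
Proof.
split; last exact: intcst.
apply/integrableP; split; first exact: measurable_cst.
by rewrite /= intcst ltry.
Qed.

Lemma HasInt_add g1 g2 I1 I2 : HasInt g1 I1 -> HasInt g2 I2 ->
  HasInt (fun t => g1 t + g2 t) (I1 + I2).
Proof.
move=> [i1 e1] [i2 e2]; split; first exact: (integrableD measurableT i1 i2).
by rewrite (integralD_EFin measurableT i1 i2) e1 e2.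
Qed.

Lemma HasInt_scale a g I : HasInt g I -> HasInt (fun t => a * g t) (a * I).
Proof.
move=> [i e]; split; first exact: (integrableZl measurableT a i).
by rewrite (_ : (fun t => _) = (fun t => a%:E * (g t)%:E)%E) ?integralZl ?e //.
Qed.

Lemma HasInt_sumI (F : 'I_d -> T -> R) (I : 'I_d -> R) :
  (forall j, HasInt (F j) (I j)) ->
  HasInt (fun t => \sum_(j < d) F j t) (\sum_(j < d) I j).
Proof.
move=> h.
suff : forall s : seq 'I_d, HasInt (fun t => \sum_(j <- s) F j t) (\sum_(j <- s) I j) by [].
elim=> [|j s ih].
  by apply: (HasInt_ext (g1 := fun _ => 0)) => [t|]; rewrite ?big_nil //; exact: HasInt_cst.
apply: (HasInt_ext (g1 := fun t => F j t + \sum_(j <- s) F j t)) => [t|]; first by rewrite big_cons.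
by rewrite big_cons; apply: HasInt_add.
Qed.

Lemma coord_le (x : 'rV[R]_d) j : x 0 j ^+ 2 <= dotv x x.
Proof.
rewrite /dotv (bigD1 j) //= -expr2 lerDl.
by apply: sumr_ge0 => i _; rewrite -expr2 sqr_ge0.
Qed.

Lemma mdot (u : 'rV[R]_d) : measurable_fun setT (fun t => dotv u (X t)).
Proof.
rewrite /dotv; apply: measurable_sum => i.
by apply: measurable_funM => //; exact: measurable_cst.
Qed.

Lemma msq (u : 'rV[R]_d) : measurable_fun setT (fun t => sqloss u (X t) (Y t)).
Proof.
rewrite /sqloss; apply: measurable_funM; first exact: measurable_cst.
rewrite /GRing.exp /=; apply: measurable_funM; last exact: measurable_funB (mdot u) mY.
exact: measurable_funB (mdot u) mY.
Qed.

Lemma mx2 j : measurable_fun setT (fun t => X t 0 j ^+ 2).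
Proof. by rewrite /GRing.exp /=; apply: measurable_funM. Qed.

Lemma HasInt_x2 j : HasInt (fun t => X t 0 j ^+ 2) (second_moment P X j).
Proof.
have i : P.-integrable setT (EFin \o (fun t => X t 0 j ^+ 2)).
  apply: (@int_bnd _ _ _ _ _ 1) => //; first exact: mx2.
  apply: filterS aeX => t h.
  rewrite ger0_norm ?sqr_ge0 //; apply: le_trans (coord_le _ j) _.
  by have := dotv_le1 h; rewrite expr1n.
split => //; rewrite /second_moment fineK //.
exact: (integrable_fin_num measurableT i).
Qed.

Lemma sqloss_ge0 (u x : 'rV[R]_d) (y : R) : 0 <= sqloss u x y.
Proof. by rewrite /sqloss mulr_ge0 ?invr_ge0 ?ler0n ?sqr_ge0. Qed.

Lemma HasInt_sq (u : 'rV[R]_d) :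
  HasInt (fun t => sqloss u (X t) (Y t)) (fine (risk P X Y u)).
Proof.
have i : P.-integrable setT (EFin \o (fun t => sqloss u (X t) (Y t))).
  apply: (@int_bnd _ _ _ _ _ (dotv u u + B ^+ 2)); last first.
  - apply: filterS2 aeX aeY => t hx hy.
    rewrite ger0_norm ?sqloss_ge0 // /sqloss.
    have cs := cauchy_schwarz_sq u (X t).
    have xx : dotv (X t) (X t) <= 1 by have := dotv_le1 hx; rewrite expr1n.
    have uu := dotv_ge0 u.
    have yy : Y t ^+ 2 <= B ^+ 2.
      rewrite -[Y t ^+ 2]real_normK ?num_real // ler_sqr ?nnegrE //.
      exact: le_trans (normr_ge0 _) hy.
    have : dotv u (X t) ^+ 2 <= dotv u u by nra.
    have := sqr_ge0 (dotv u (X t) + Y t); nra.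
  - exact: msq.
  - by rewrite addr_ge0 ?dotv_ge0 ?sqr_ge0.
split => //; rewrite /risk fineK //.
exact: (integrable_fin_num measurableT i).
Qed.

Lemma HasInt_eqI g I1 I2 : I1 = I2 -> HasInt g I1 -> HasInt g I2.
Proof. by move=> ->. Qed.

Variables (eta : R) (q : 'I_d -> R) (k m : nat) (wstar : 'rV[R]_d).
Hypothesis q1 : \sum_(j < d) q j = 1.
Hypothesis q0 : forall j, 0 <= q j.
Hypothesis k0 : (0 < k)%N.
Hypothesis B0 : 0 < B.
Hypothesis eta0 : 0 < eta.
Hypothesis wsB : norm2 wstar <= B.
Hypothesis m0 : (0 < m)%N.
Hypothesis aeq : {ae P, forall t, forall j, q j = 0 -> X t 0 j = 0}.

Definition rsk (u : 'rV[R]_d) := fine (risk P X Y u).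

Definition Cm := 4 * B ^+ 2 *
  (k%:R^-1 * \sum_(j < d) q j * (q j)^-1 ^+ 2 * second_moment P X j + 1).

Lemma HasInt_M : HasInt (fun t => Mv k q B (X t)) Cm.
Proof.
pose a (j : 'I_d) := 4 * B ^+ 2 * k%:R^-1 * (q j * (q j)^-1 ^+ 2).
apply: (HasInt_ext (g1 := fun t => \sum_(j < d) a j * X t 0 j ^+ 2 + 4 * B ^+ 2)).
  move=> t; rewrite /Mv /cc mulrDr mulr1 mulr_sumr mulr_sumr; congr (_ + _).
  by apply: eq_bigr => j _; rewrite /a exprMn; ring.
apply: (HasInt_eqI (I1 := \sum_(j < d) a j * second_moment P X j + 4 * B ^+ 2)).
  rewrite /Cm mulrDr mulr1 mulr_sumr mulr_sumr; congr (_ + _).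
  by apply: eq_bigr => j _; rewrite /a; ring.
apply: HasInt_add; last exact: HasInt_cst.
apply: HasInt_sumI => j; apply: HasInt_scale; exact: HasInt_x2.
Qed.

Lemma step_ae (w : 'rV[R]_d) : norm2 w <= B ->
  {ae P, forall t, Qv k q B eta w wstar (X t) (Y t) / (2 * eta) + sqloss w (X t) (Y t)
     <= Dn (w - wstar) / (2 * eta) + eta / 2 * Mv k q B (X t)
        + sqloss wstar (X t) (Y t)}.
Proof.
move=> wB; apply: filterS3 aeX aeY aeq => t hx hy hq.
exact: step_pt.
Qed.

Lemma norm_update (w : 'rV[R]_d) p xt : norm2 (update B eta w p xt) <= B.
Proof.
rewrite /update /= norm2Z.
have mp : 0 < Num.max (norm2 (w - eta *: (p *: xt))) B by rewrite lt_max B0 orbT.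
rewrite ger0_norm; last by rewrite divr_ge0 // ltW.
rewrite mulrAC ler_pdivrMr //; apply: ler_wpM2l; first exact: ltW.
by rewrite le_max lexx.
Qed.

Definition floss (ws : seq 'rV[R]_d) := risk P X Y (avg_iter ws).

Lemma run_exp_ge0 n ws : (0 <= run_exp P X Y B eta q k floss n ws)%E.
Proof.
elim: n ws => [|n ih] ws /=.
  by apply: integral_ge0 => t _; rewrite lee_fin sqloss_ge0.
apply: integral_ge0 => t _; apply: sume_ge0 => s _; apply: mule_ge0.
  by rewrite lee_fin sweight_ge0.
by apply: avg_phi_ge0 => p; exact: ih.
Qed.

Lemma sum_const_seq (A : Type) (s : seq A) (c : R) :
  \sum_(u <- s) c = (size s)%:R * c.
Proof.
elim: s => [|a s ih]; first by rewrite big_nil mul0r.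
by rewrite big_cons ih /= -addn1 natrD mulrDl mul1r addrC.
Qed.

Lemma jensen_seq (A : Type) (s : seq A) (b : A -> R) : (0 < size s)%N ->
  (\sum_(u <- s) b u) ^+ 2 <= (size s)%:R * \sum_(u <- s) b u ^+ 2.
Proof.
move=> s0; set n : R := (size s)%:R; set S := \sum_(u <- s) b u.
have n0 : 0 < n by rewrite ltr0n.
set c := S / n.
have h : 0 <= \sum_(u <- s) (b u - c) ^+ 2 by apply: sumr_ge0 => u _; exact: sqr_ge0.
have e : \sum_(u <- s) (b u - c) ^+ 2 =
    \sum_(u <- s) b u ^+ 2 - 2 * c * S + n * c ^+ 2.
  rewrite -sum_const_seq /S mulr_sumr -sumrB -big_split /=.
  by apply: eq_bigr => u _; ring.
rewrite e in h.
have : n * c ^+ 2 = S ^+ 2 / n by rewrite /c; field; rewrite gt_eqF.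
have : 2 * c * S = 2 * (S ^+ 2 / n) by rewrite /c; field; rewrite gt_eqF.
move=> e1 e2; rewrite e1 e2 in h.
have h2 : S ^+ 2 / n <= \sum_(u <- s) b u ^+ 2 by lra.
by rewrite -ler_pdivrMl // mulrC.
Qed.

Lemma HasInt_sumS (A : Type) (s : seq A) (F : A -> T -> R) (I : A -> R) :
  (forall j, HasInt (F j) (I j)) ->
  HasInt (fun t => \sum_(j <- s) F j t) (\sum_(j <- s) I j).
Proof.
move=> h; elim: s => [|j s ih].
  by apply: (HasInt_ext (g1 := fun _ => 0)) => [t|]; rewrite ?big_nil //; exact: HasInt_cst.
apply: (HasInt_ext (g1 := fun t => F j t + \sum_(j <- s) F j t)) => [t|]; first by rewrite big_cons.
by rewrite big_cons; apply: HasInt_add.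
Qed.

Lemma HasInt_sub g1 g2 I1 I2 : HasInt g1 I1 -> HasInt g2 I2 ->
  HasInt (fun t => g1 t - g2 t) (I1 - I2).
Proof.
move=> h1 h2; have := HasInt_add h1 (HasInt_scale (-1) h2).
rewrite mulN1r => h; apply: HasInt_ext h => t; by rewrite mulN1r.
Qed.

Lemma HasInt_meas g I : HasInt g I -> measurable_fun setT g.
Proof. by move=> [i _]; apply/measurable_EFinP; exact: (measurable_int P i). Qed.

Lemma HasInt_le (f : T -> \bar R) g I : (forall t, (0 <= f t)%E) -> HasInt g I ->
  {ae P, forall t, (f t <= (g t)%:E)%E} -> (\int[P]_t f t <= I%:E)%E.
Proof.
move=> f0 h fg; case: (h) => _ <-; apply: int_le_ae => //; exact: HasInt_meas h.
Qed.

Lemma dotv_sum_seq (s : seq 'rV[R]_d) x :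
  dotv (\sum_(u <- s) u) x = \sum_(u <- s) dotv u x.
Proof.
elim: s => [|u s ih].
  by rewrite !big_nil /dotv big1 // => i _; rewrite mxE mul0r.
by rewrite !big_cons dotvDl ih.
Qed.

Lemma sq_avg (s : seq 'rV[R]_d) x y : (0 < size s)%N ->
  sqloss (avg_iter s) x y <= (size s)%:R^-1 * \sum_(u <- s) sqloss u x y.
Proof.
move=> s0; set n : R := (size s)%:R.
have n0 : 0 < n by rewrite ltr0n.
have e1 : dotv (avg_iter s) x - y = n^-1 * \sum_(u <- s) (dotv u x - y).
  rewrite /avg_iter dotvZl dotv_sum_seq sumrB sum_const_seq -/n.
  by field; rewrite gt_eqF.
rewrite /sqloss e1 -mulr_sumr.
have J := jensen_seq (fun u => dotv u x - y) s0; rewrite -/n in J.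
set S := \sum_(u <- s) (dotv u x - y) in J *.
set Q := \sum_(u <- s) (dotv u x - y) ^+ 2 in J *.
have : n^-1 ^+ 2 * S ^+ 2 <= n^-1 ^+ 2 * (n * Q).
  by apply: ler_wpM2l; rewrite ?sqr_ge0.
have -> : n^-1 ^+ 2 * (n * Q) = n^-1 * Q by field; rewrite gt_eqF.
rewrite exprMn => h.
have : 0 <= (2 : R)^-1 by rewrite invr_ge0 ler0n.
nra.
Qed.

Lemma Ej_aff (w x : 'rV[R]_d) (y a b : R) (F : R -> R) :
  Ej w x y (fun p => a + b * F p) = a + b * Ej w x y F.
Proof.
rewrite /Ej; case: ifP => // /negbT wn.
transitivity (\sum_(j < d) (a * pj w j + b * (pj w j * F (w 0 j / pj w j * x 0 j - y)))).
  by apply: eq_bigr => j _; ring.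
by rewrite big_split /= -!mulr_sumr pj_sum // mulr1.
Qed.

Lemma Ej_scale (w x : 'rV[R]_d) (y b : R) (F : R -> R) :
  Ej w x y (fun p => b * F p) = b * Ej w x y F.
Proof.
have -> : (fun p => b * F p) = (fun p => 0 + b * F p) by apply/funext => p; rewrite add0r.
by rewrite Ej_aff add0r.
Qed.

Definition Phi n (ws0 : seq 'rV[R]_d) (w : 'rV[R]_d) : R :=
  m%:R^-1 * (\sum_(u <- ws0) rsk u + n.+1%:R * rsk wstar
    + Dn (w - wstar) / (2 * eta) + n.+1%:R * (eta / 2 * Cm)).

Lemma HasInt_rhs (w : 'rV[R]_d) c :
  HasInt (fun t => c + eta / 2 * Mv k q B (X t) + sqloss wstar (X t) (Y t))
     (c + eta / 2 * Cm + rsk wstar).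
Proof.
apply: HasInt_add; last exact: HasInt_sq.
apply: HasInt_add; first exact: HasInt_cst.
apply: HasInt_scale; exact: HasInt_M.
Qed.

Lemma base_bound ws0 w : norm2 w <= B -> (size ws0 + 1 = m)%N ->
  (floss (rcons ws0 w) <= (Phi 0 ws0 w)%:E)%E.
Proof.
move=> wB sz.
have sz' : size (rcons ws0 w) = m by rewrite size_rcons -sz addn1.
have H1 : (floss (rcons ws0 w) <= (m%:R^-1 * \sum_(u <- rcons ws0 w) rsk u)%:E)%E.
  rewrite /floss /risk.
  have HI : HasInt (fun t => m%:R^-1 * \sum_(u <- rcons ws0 w) sqloss u (X t) (Y t))
      (m%:R^-1 * \sum_(u <- rcons ws0 w) rsk u).
    by apply: HasInt_scale; apply: HasInt_sumS => u; exact: HasInt_sq.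
  apply: HasInt_le HI _; first by move=> t; rewrite lee_fin sqloss_ge0.
  apply: aeW => t; rewrite lee_fin -sz'; apply: sq_avg; rewrite sz'.
  exact: m0.
have H2 : rsk w <= Dn (w - wstar) / (2 * eta) + eta / 2 * Cm + rsk wstar.
  rewrite -lee_fin.
  have -> : (rsk w)%:E = (\int[P]_t (sqloss w (X t) (Y t))%:E)%E.
    by case: (HasInt_sq w).
  apply: HasInt_le (HasInt_rhs w (Dn (w - wstar) / (2 * eta))) _.
    by move=> t; rewrite lee_fin sqloss_ge0.
  apply: filterS (step_ae wB) => t ht; rewrite lee_fin.
  apply: le_trans ht; rewrite lerDr divr_ge0 //.
    exact: Qv_ge0.
  by rewrite mulr_ge0 // ltW.
apply: le_trans H1 _; rewrite lee_fin /Phi -cats1 big_cat big_seq1 /=.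
apply: ler_wpM2l; first by rewrite invr_ge0 ler0n.
lra.
Qed.

Lemma main_bound n : forall ws0 w, norm2 w <= B -> (size ws0 + n.+1 = m)%N ->
  (run_exp P X Y B eta q k floss n (rcons ws0 w) <= (Phi n ws0 w)%:E)%E.
Proof.
elim: n => [|n ih] ws0 w wB sz; first exact: base_bound.
rewrite /= last_rcons.
set c1 := m%:R^-1 * (\sum_(u <- ws0) rsk u + rsk w + n.+1%:R * rsk wstar
            + n.+1%:R * (eta / 2 * Cm)).
set beta := (m%:R : R)^-1.
have beta0 : 0 <= beta by rewrite invr_ge0 ler0n.
have HI : HasInt (fun t => c1 + beta * ((Dn (w - wstar) / (2 * eta)
     + eta / 2 * Mv k q B (X t) + sqloss wstar (X t) (Y t)) - sqloss w (X t) (Y t)))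
   (c1 + beta * ((Dn (w - wstar) / (2 * eta) + eta / 2 * Cm + rsk wstar) - rsk w)).
  apply: HasInt_add; first exact: HasInt_cst.
  apply: HasInt_scale; apply: HasInt_sub; first exact: HasInt_rhs.
  exact: HasInt_sq.
apply: le_trans (HasInt_le _ HI _) _.
- move=> t; apply: sume_ge0 => s _; apply: mule_ge0.
    by rewrite lee_fin sweight_ge0.
  by apply: avg_phi_ge0 => p; exact: run_exp_ge0.
- apply: filterS (step_ae wB) => t ht.
  apply: (@le_trans _ _ (\sum_(s : {ffun 'I_k -> 'I_d}) (sweight q s)%:E *
      avg_phi w (X t) (Y t) (fun p =>
        (Phi n (rcons ws0 w) (update B eta w p (xtilde q s (X t))))%:E))%E).
    apply: lee_sum => s _; apply: lee_wpmul2l; first by rewrite lee_fin sweight_ge0.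
    apply: avg_phi_le => p; apply: ih; first exact: norm_update.
    by rewrite size_rcons -sz addSnnS.
  under eq_bigr do rewrite avg_phiE -EFinM.
  rewrite sumEFin lee_fin.
  have ePhi u : Phi n (rcons ws0 w) u = c1 + beta * ((2 * eta)^-1 * Dn (u - wstar)).
    by rewrite /Phi /c1 /beta -cats1 big_cat big_seq1 /=; ring.
  have eF (s : {ffun 'I_k -> 'I_d}) :
    (fun p => Phi n (rcons ws0 w) (update B eta w p (xtilde q s (X t)))) =
    (fun p => c1 + beta * ((2 * eta)^-1 *
        Dn (update B eta w p (xtilde q s (X t)) - wstar))).
    by apply/funext => p; exact: ePhi.
  under eq_bigr do rewrite eF Ej_aff Ej_scale.
  have -> : \sum_(s : {ffun 'I_k -> 'I_d}) sweight q s * (c1 + beta * ((2 * eta)^-1 *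
      Ej w (X t) (Y t) (fun p => Dn (update B eta w p (xtilde q s (X t)) - wstar)))) =
      c1 * (\sum_(s : {ffun 'I_k -> 'I_d}) sweight q s) + beta * ((2 * eta)^-1 *
      Qv k q B eta w wstar (X t) (Y t)).
    rewrite /Qv !mulr_sumr -big_split /=; apply: eq_bigr => s _; ring.
  rewrite sweight_sum // mulr1 lerD2l; apply: ler_wpM2l => //.
  rewrite mulrC; lra.
- rewrite lee_fin /Phi /c1 /beta -[n.+2]addn1 natrD; apply: eqle; ring.
Qed.

End Gen.

Unset Implicit Arguments.

Theorem theorem2 (R : realType) (d : nat) (dT : measure_display)
  (T : measurableType dT) (P : probability T R)
  (X : T -> 'rV[R]_d) (Y : T -> R) (B : R) (m k : nat)
  (w1 wstar : 'rV[R]_d) :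
  (0 < B) -> (0 < m)%N -> (0 < k)%N ->
  (forall i : 'I_d, measurable_fun setT (fun t => X t 0 i)) ->
  measurable_fun setT Y ->
  {ae P, forall t, norm2 (X t) <= 1} ->
  {ae P, forall t, `|Y t| <= B} ->
  0 < \sum_(j < d) Num.sqrt (second_moment P X j) ->
  w1 != 0 -> norm2 w1 <= B ->
  norm2 wstar <= B ->
  let mom := second_moment P X in
  let hn := half_norm mom in
  let eta := (Num.sqrt (m%:R * (k%:R^-1 * hn + 1)))^-1 in
  (expected_output_risk P X Y B eta (ddaerr_q mom) k m w1
     <= risk P X Y wstar
        + (4 * B ^+ 2 / Num.sqrt m%:R * Num.sqrt (k%:R^-1 * hn + 1))%:E)%E.
Proof.
move=> B0 m0 k0 mX mY aeX aeY S0 w1n w1B wsB; cbv zeta.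
set mom := second_moment P X.
set hn := half_norm mom.
set eta := (Num.sqrt (m%:R * (k%:R^-1 * hn + 1)))^-1.
set S := \sum_(j < d) Num.sqrt (second_moment P X j) in S0.
set q := ddaerr_q mom.
have mom0 j : 0 <= mom j.
  by rewrite /mom /second_moment fine_ge0 // integral_ge0 // => t _; rewrite lee_fin sqr_ge0.
have q0 j : 0 <= q j by rewrite /q /ddaerr_q divr_ge0 ?sqrtr_ge0 // ltW.
have q1 : \sum_(j < d) q j = 1.
  by rewrite /q /ddaerr_q -mulr_suml divff // gt_eqF.
have aeq : {ae P, forall t, forall j, q j = 0 -> X t 0 j = 0}.
  apply: filter_forall => j.
  have [qj|qj] := eqVneq (q j) 0; last by apply: aeW => t h; move: qj; rewrite h eqxx.
  have sq0 : Num.sqrt (mom j) == 0.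
    by move/eqP: qj; rewrite /q /ddaerr_q mulf_eq0 invr_eq0 (gt_eqF S0) orbF => /eqP ->.
  have mj : mom j = 0 by apply/le_anti; rewrite mom0 andbT -sqrtr_eq0.
  have [_ hi] := HasInt_x2 mX aeX j.
  pose g := fun t => X t 0 j ^+ 2.
  have mf : measurable_fun setT (EFin \o g).
    by apply: measurableT_comp => //; exact: mx2.
  have hz : (\int[P]_t `|(EFin \o g) t| = 0)%E.
    apply: (@eq_trans _ _ ((mom j)%:E)); last by rewrite mj.
    rewrite -hi; apply: eq_integral => t _.
    by rewrite /= /g ger0_norm // sqr_ge0.
  have := (ae_eq_integral_abs P measurableT mf).1 hz.
  apply: filterS => t ht _; have /= [h] := ht I.
  by apply/eqP; rewrite -sqrf_eq0; apply/eqP; exact: h.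
have G0 : 0 <= k%:R^-1 * hn + 1.
  by rewrite addr_ge0 // mulr_ge0 ?invr_ge0 ?ler0n // /hn /half_norm sqr_ge0.
have eta0 : 0 < eta.
  rewrite /eta invr_gt0 sqrtr_gt0 mulr_gt0 ?ltr0n //; apply: (lt_le_trans ltr01).
  by rewrite lerDr mulr_ge0 ?invr_ge0 ?ler0n // /hn /half_norm sqr_ge0.
have := main_bound mX mY aeX aeY q1 q0 k0 B0 eta0 wsB m0 aeq (n:=m.-1) (ws0:=[::]) w1B.
rewrite add0n prednK // => /(_ erefl) H.
apply: le_trans H _.
have hr : risk P X Y wstar = (rsk P X Y wstar)%:E.
  by case: (HasInt_sq mX mY aeX aeY wstar) => _ <-.
rewrite hr -EFinD lee_fin /Phi big_nil add0r prednK //.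
set G := k%:R^-1 * hn + 1.
have hnE : hn = S ^+ 2.
  rewrite /hn /half_norm /S; congr (_ ^+ 2); apply: eq_bigr => j _.
  by rewrite ger0_norm.
have hC : Cm P X B q k = 4 * B ^+ 2 * G.
  rewrite /Cm /G hnE; congr (_ * (_ * _ + _)).
  have -> : S ^+ 2 = \sum_(j < d) Num.sqrt (mom j) * S by rewrite -mulr_suml expr2.
  apply: eq_bigr => j _; rewrite /q /ddaerr_q -/S -/mom.
  have [mj|mj] := eqVneq (mom j) 0; first by rewrite mj sqrtr0 !mul0r.
  have sp : 0 < Num.sqrt (mom j) by rewrite sqrtr_gt0 lt_neqAle eq_sym mj mom0.
  have ss : Num.sqrt (mom j) ^+ 2 = mom j by rewrite sqr_sqrtr.
  move: sp ss; set s := Num.sqrt (mom j) => sp ss; rewrite -ss; field.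
  by rewrite (gt_eqF sp) (gt_eqF S0).
rewrite hC.
have DB : Dn (w1 - wstar) <= 4 * B ^+ 2.
  have e1 : Dn (w1 - wstar) = dotv w1 w1 - 2 * dotv w1 wstar + dotv wstar wstar.
    by rewrite /Dn dotvBl !dotvBr (dotvC wstar w1); ring.
  have e2 : 0 <= dotv w1 w1 + 2 * dotv w1 wstar + dotv wstar wstar.
    have := dotv_ge0 (w1 + wstar).
    by rewrite dotvDl !dotvDr (dotvC wstar w1) -addrA [X in _ + X]addrA addrA -mulr2n mulr_natl.
  have := dotv_le1 w1B; have := dotv_le1 wsB; lra.
have G1 : 1 <= G by rewrite /G lerDr mulr_ge0 ?invr_ge0 ?ler0n // hnE sqr_ge0.
set sm := Num.sqrt (m%:R : R); set sg := Num.sqrt G.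
have smp : 0 < sm by rewrite sqrtr_gt0 ltr0n.
have sgp : 0 < sg by rewrite sqrtr_gt0 (lt_le_trans ltr01).
have msq : (m%:R : R) = sm ^+ 2 by rewrite sqr_sqrtr // ler0n.
have Gsq : G = sg ^+ 2 by rewrite sqr_sqrtr // (le_trans ler01).
have etaE : eta = (sm * sg)^-1 by rewrite /eta sqrtrM ?ler0n.
have e0 : 0 < 2 * eta by rewrite mulr_gt0.
have key : (m%:R^-1 * (m%:R * rsk P X Y wstar + 4 * B ^+ 2 / (2 * eta) +
   m%:R * (eta / 2 * (4 * B ^+ 2 * G))) = rsk P X Y wstar + 4 * B ^+ 2 / sm * sg).
  rewrite etaE Gsq msq; field.
  by rewrite (gt_eqF smp) (gt_eqF sgp).
rewrite -key; apply: ler_wpM2l; first by rewrite invr_ge0 ler0n.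
rewrite lerD2r lerD2l; apply: ler_wpM2r => //.
by rewrite invr_ge0 ltW.
Qed.
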